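(* Let $m\ge1$, $\alpha>0$, let $A$ be a finite set of bilinear maps $\Phi:\mathbb{R}^m\times\mathbb{R}^m\to\mathbb{R}^m$ each of whose coordinates is a bilinear form with nonnegative coefficients, and let $\mathbf v\in\mathbb{R}_{\ge0}^m$. Let $F\subseteq\mathbb{R}^m\times\mathbb{N}$ be the smallest set such that $(\mathbf v,1)\in F$ and, whenever $(\mathbf w,i),(\mathbf u,j)\in F$ and $\Phi\in A$, also $(\Phi(\mathbf w,\mathbf u),i+j)\in F$. Suppose there is a bounded set $X\subseteq\mathbb{R}_{\ge0}^m$ such that $\frac{1}{\alpha}\mathbf v\in\operatorname{conv}_\le(X)$ and, for all $\mathbf x,\mathbf x'\in X$ and all $\Phi\in A$, $\Phi(\mathbf x,\mathbf x')\in\operatorname{conv}_\le(X)$. Then for every $\mathbf p\in\mathbb{R}_{\ge0}^m$ and every integer $n$, $$\max\{|\mathbf p\cdot\mathbf u| : (\mathbf u,n)\in F\}\le \alpha^n\max_{\mathbf x\in X}|\mathbf p\cdot\mathbf x| .$$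
   Context: For vectors $\mathbf x,\mathbf x'\in\mathbb{R}^m$, $\mathbf x\le\mathbf x'$ means coordinatewise inequality. For $X\subseteq\mathbb{R}_{\ge0}^m$, $\operatorname{conv}(X)$ is the convex hull of $X$ and $\operatorname{conv}_\le(X)=\{\mathbf x\in\mathbb{R}_{\ge0}^m:\ \exists\,\mathbf x'\in\operatorname{conv}(X),\ \mathbf x\le \mathbf x'\}$. *)

(* Defs.v *)
From HB Require Import structures.
From mathcomp Require Import all_boot all_order all_algebra.
Set Implicit Arguments. Unset Strict Implicit. Unset Printing Implicit Defensive.
Import Order.TTheory GRing.Theory Num.Theory.
Local Open Scope ring_scope.

Section Defs.
Variables (R : realFieldType) (m : nat).

Definition nonneg (x : 'rV[R]_m) : Prop := forall i, 0 <= x ord0 i.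

Definition le_vec (x x' : 'rV[R]_m) : Prop := forall i, x ord0 i <= x' ord0 i.

Definition dot (p x : 'rV[R]_m) : R := \sum_(i < m) p ord0 i * x ord0 i.

Definition conv (X : 'rV[R]_m -> Prop) (y : 'rV[R]_m) : Prop :=
  exists (k : nat) (lam : 'I_k -> R) (xs : 'I_k -> 'rV[R]_m),
    [/\ forall j, 0 <= lam j,
        \sum_(j < k) lam j = 1,
        forall j, X (xs j) &
        y = \sum_(j < k) lam j *: xs j].

Definition conv_le (X : 'rV[R]_m -> Prop) (y : 'rV[R]_m) : Prop :=
  nonneg y /\ exists y', conv X y' /\ le_vec y y'.

Definition bounded (X : 'rV[R]_m -> Prop) : Prop :=
  exists B : R, forall x, X x -> forall i, `|x ord0 i| <= B.

Definition bilin (c : 'I_m -> 'I_m -> 'I_m -> R) (w u : 'rV[R]_m) : 'rV[R]_m :=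
  \row_(k < m) \sum_(i < m) \sum_(j < m) c k i j * w ord0 i * u ord0 j.

Inductive inF (I : Type) (Phi : I -> 'I_m -> 'I_m -> 'I_m -> R) (v : 'rV[R]_m)
  : 'rV[R]_m -> nat -> Prop :=
| inF_base : inF Phi v v 1
| inF_step : forall (a : I) w i u j,
    inF Phi v w i -> inF Phi v u j -> inF Phi v (bilin (Phi a) w u) (i + j).

End Defs.

(* Main.v *)
Require Import Defs.
From HB Require Import structures.
From mathcomp Require Import all_boot all_order all_algebra.
Import Order.TTheory GRing.Theory Num.Theory.
Local Open Scope ring_scope.

Set Implicit Arguments. Unset Strict Implicit.
Section H.
Variables (R : realFieldType) (m : nat).

Lemma dot_le (q y y' : 'rV[R]_m) : nonneg q -> le_vec y y' -> dot q y <= dot q y'.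
Proof. move=> hq hy; apply: ler_sum => i _; exact: ler_wpM2l. Qed.

Lemma dot_ge0 (q y : 'rV[R]_m) : nonneg q -> nonneg y -> 0 <= dot q y.
Proof. move=> hq hy; apply: sumr_ge0 => i _; exact: mulr_ge0. Qed.

Lemma dotZ (q y : 'rV[R]_m) a : dot q (a *: y) = a * dot q y.
Proof.
rewrite /dot mulr_sumr; apply: eq_bigr => i _; rewrite mxE.
by rewrite mulrA (mulrC _ a) mulrA.
Qed.

Lemma dot_conv (X : 'rV[R]_m -> Prop) q y s :
  (forall x, X x -> dot q x <= s) -> conv X y -> dot q y <= s.
Proof.
move=> hs [k [lam [xs [hl hsum hX ->]]]].
have -> : dot q (\sum_(j < k) lam j *: xs j) = \sum_(j < k) lam j * dot q (xs j).
  rewrite /dot.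
  under eq_bigr => i _ do rewrite summxE mulr_sumr.
  rewrite exchange_big /=; apply: eq_bigr => j _.
  rewrite mulr_sumr; apply: eq_bigr => i _; rewrite mxE.
  by rewrite mulrA (mulrC _ (lam j)) mulrA.
apply: (@le_trans _ _ (\sum_(j < k) lam j * s)).
  by apply: ler_sum => j _; apply: ler_wpM2l => //; exact: hs.
by rewrite -mulr_suml hsum mul1r.
Qed.

Lemma dot_conv_le (X : 'rV[R]_m -> Prop) q y s : nonneg q ->
  (forall x, X x -> dot q x <= s) -> conv_le X y -> dot q y <= s.
Proof.
move=> hq hs [_ [y' [hc hle]]].
exact: le_trans (dot_le hq hle) (dot_conv hs hc).
Qed.

Lemma dot_bilin_r c (q w u : 'rV[R]_m) :
  dot q (bilin c w u) =
  dot (\row_j \sum_(k < m) \sum_(i < m) q ord0 k * c k i j * w ord0 i) u.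
Proof.
rewrite /dot /bilin.
transitivity (\sum_(k < m) \sum_(i < m) \sum_(j < m)
   q ord0 k * c k i j * w ord0 i * u ord0 j).
  apply: eq_bigr => k _; rewrite mxE mulr_sumr; apply: eq_bigr => i _.
  rewrite mulr_sumr; apply: eq_bigr => j _; by rewrite !mulrA.
transitivity (\sum_(j < m) \sum_(k < m) \sum_(i < m)
   q ord0 k * c k i j * w ord0 i * u ord0 j).
  rewrite (eq_bigr (fun k => \sum_(j < m) \sum_(i < m) q ord0 k * c k i j * w ord0 i * u ord0 j)); first by rewrite exchange_big.
  by move=> k _; rewrite exchange_big.
apply: eq_bigr => j _; rewrite mxE mulr_suml; apply: eq_bigr => k _.
by rewrite mulr_suml.
Qed.

Lemma dot_bilin_l c (q w u : 'rV[R]_m) :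
  dot q (bilin c w u) =
  dot (\row_i \sum_(k < m) \sum_(j < m) q ord0 k * c k i j * u ord0 j) w.
Proof.
rewrite /dot /bilin.
transitivity (\sum_(k < m) \sum_(i < m) \sum_(j < m)
   q ord0 k * c k i j * u ord0 j * w ord0 i).
  apply: eq_bigr => k _; rewrite mxE mulr_sumr; apply: eq_bigr => i _.
  rewrite mulr_sumr; apply: eq_bigr => j _; rewrite !mulrA.
  by rewrite -!mulrA (mulrC (w ord0 i)).
transitivity (\sum_(i < m) \sum_(k < m) \sum_(j < m)
   q ord0 k * c k i j * u ord0 j * w ord0 i).
  by rewrite exchange_big.
apply: eq_bigr => i _; rewrite mxE mulr_suml; apply: eq_bigr => k _.
by rewrite mulr_suml.
Qed.

End H.
Unset Implicit Arguments. Set Strict Implicit.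

Theorem mainTheorem2 (R : realFieldType) (m : nat) (hm : (0 < m)%N)
  (alpha : R) (halpha : 0 < alpha)
  (I : finType) (Phi : I -> 'I_m -> 'I_m -> 'I_m -> R)
  (hPhi : forall a k i j, 0 <= Phi a k i j)
  (v : 'rV[R]_m) (hv : nonneg v)
  (X : 'rV[R]_m -> Prop) (hXnn : forall x, X x -> nonneg x) (hXb : bounded X)
  (hvX : conv_le X (alpha^-1 *: v))
  (hcl : forall a x x', X x -> X x' -> conv_le X (bilin (Phi a) x x')) :
  forall p : 'rV[R]_m, nonneg p ->
  forall (s : R), (forall x, X x -> `|dot p x| <= s) ->
  forall (n : nat) (u : 'rV[R]_m), inF Phi v u n ->
    `|dot p u| <= alpha ^+ n * s.
Proof.
have key : forall n u, inF Phi v u n -> nonneg u /\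
   forall q : 'rV[R]_m, nonneg q -> forall s, (forall x, X x -> dot q x <= s) ->
     dot q u <= alpha ^+ n * s.
  move=> n u; elim => {n u}.
    split=> // q hq s hs.
    have := dot_conv_le hq hs hvX; rewrite dotZ expr1.
    by rewrite ler_pdivrMl // mulrC.
  move=> a w i u j _ [hw IHw] _ [hu IHu]; split.
    move=> k; rewrite mxE; apply: sumr_ge0 => i' _; apply: sumr_ge0 => j' _.
    by apply: mulr_ge0; [apply: mulr_ge0|].
  move=> q hq s hs.
  rewrite dot_bilin_r exprD (mulrC (alpha ^+ i)) -mulrA.
  apply: IHu.
    move=> j'; rewrite mxE; apply: sumr_ge0 => k _; apply: sumr_ge0 => i' _.
    by apply: mulr_ge0; [apply: mulr_ge0|].
  move=> x' hx'; rewrite -dot_bilin_r dot_bilin_l; apply: IHw.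
    move=> i'; rewrite mxE; apply: sumr_ge0 => k _; apply: sumr_ge0 => j' _.
    by apply: mulr_ge0; [apply: mulr_ge0| exact: hXnn].
  move=> x hx; rewrite -dot_bilin_l.
  exact: (dot_conv_le hq hs (hcl a x x' hx hx')).
move=> p hp s hs n u hu; have [hun H] := key n u hu.
rewrite ger0_norm; last exact: dot_ge0.
apply: H => // x hx; apply: le_trans (hs x hx); exact: ler_norm.
Qed.
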